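(* Let $r\ge5$. If $T$ is a $K_r$-tree then $\langle T\rangle_{K_r}=T$, i.e., $T$ is $K_r$-stable.
   Context: A graph $T$ is a $K_r$-tree of order $\vartheta$ if it is the union of $\vartheta$ copies $H_1,\dots,H_\vartheta$ of $K_r$ such that, for every $1<i\le\vartheta$, $H_i$ shares exactly one edge with $H_1\cup\cdots\cup H_{i-1}$ (the common vertices being exactly the two endpoints of that edge). For a graph $G$, the $K_r$-dynamics repeatedly adds an edge $e$ between two vertices of $G$ whenever there is a copy of $K_r$ in which $e$ is the only edge not yet present; $\langle G\rangle_{K_r}$ is the final graph. *)

(* Defs.v *)
From mathcomp Require Import all_boot.
Set Implicit Arguments. Unset Strict Implicit. Unset Printing Implicit Defensive.

(* A simple graph on a finite vertex type V is given by an edge relation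
   e : rel V (for K_r-trees symmetry/irreflexivity follow from the definition). *)

(* The graph on V is a K_r-tree of order #|Hs| = size Hs: Hs is the list of
   vertex sets of the copies H_1, ..., H_theta of K_r (0-indexed here).  *)
Definition is_Kr_tree (V : finType) (r : nat) (e : rel V) : Prop :=
  exists Hs : seq {set V},
    [/\ Hs <> [::],
        (forall H, H \in Hs -> #|H| = r),
        (forall x : V, exists2 H, H \in Hs & x \in H),
        (forall x y : V, e x y <-> (x != y /\ exists2 H, H \in Hs & (x \in H) && (y \in H)))
      & (* each later copy shares exactly one edge (exactly two vertices, which
           are adjacent in the union of the earlier copies) with the earlier ones *)
        (forall i, 0 < i < size Hs ->
           let P := \bigcup_(j < i) nth set0 Hs j in
           #|nth set0 Hs i :&: P| = 2 /\
           exists2 j, j < i & (nth set0 Hs i :&: P) \subset nth set0 Hs j)].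

(* The final graph <G>_{K_r} of the K_r-dynamics: the least edge relation
   containing e that is closed under adding an edge xy whenever some copy of
   K_r (vertex set S, |S| = r, containing x and y) has all its other edges. *)
Inductive Kr_closure (V : finType) (r : nat) (e : rel V) : V -> V -> Prop :=
| Krc_base x y : e x y -> Kr_closure r e x y
| Krc_step (S : {set V}) x y :
    #|S| = r -> x \in S -> y \in S -> x != y ->
    (forall u v, u \in S -> v \in S -> u != v ->
       ~ ((u == x) && (v == y) || (u == y) && (v == x)) ->
       Kr_closure r e u v) ->
    Kr_closure r e x y.

(* Main.v *)
Require Import Defs.
From mathcomp Require Import all_boot zify.
Set Implicit Arguments. Unset Strict Implicit. Unset Printing Implicit Defensive.

Lemma two_elems (V : finType) (K : {set V}) x :
  1 < #|K| -> x \in K -> exists2 y, y \in K & y != x.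
Proof.
move=> hK xK; move: hK; rewrite (cardsD1 x) xK add1n ltnS => /card_gt0P [y].
by rewrite !inE => /andP [yx yK]; exists y.
Qed.

Lemma inBP (V : finType) (H : nat -> {set V}) n x :
  reflect (exists2 j, j < n & x \in H j) (x \in \bigcup_(j < n) H j).
Proof.
apply: (iffP bigcupP) => [[j _ xj]|[j jn xj]].
- by exists (nat_of_ord j) => //; exact: ltn_ord.
- by exists (Ordinal jn).
Qed.

Definition condT (V : finType) (Hs : seq {set V}) :=
  forall i, 0 < i < size Hs ->
           let P := \bigcup_(j < i) nth set0 Hs j in
           #|nth set0 Hs i :&: P| = 2 /\
           exists2 j, j < i & (nth set0 Hs i :&: P) \subset nth set0 Hs j.

Lemma interA (V : finType) (Hs : seq {set V}) : condT Hs ->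
  forall i j, i < j -> j < size Hs ->
  #|nth set0 Hs i :&: nth set0 Hs j| <= 2.
Proof.
move=> hc i j ij js.
have /= [h2 _] := hc j (introT andP (conj (leq_ltn_trans (leq0n i) ij) js)).
rewrite -h2; apply: subset_leq_card; rewrite setIC; apply: setIS.
by apply/subsetP => z zi; apply/inBP; exists i.
Qed.

Lemma cliqueB (V : finType) (Hs : seq {set V}) : condT Hs ->
  forall n, n <= size Hs -> forall K : {set V}, 1 < #|K| ->
  (forall x y, x \in K -> y \in K -> x != y ->
     exists2 i, i < n & (x \in nth set0 Hs i) && (y \in nth set0 Hs i)) ->
  exists2 i, i < n & K \subset nth set0 Hs i.
Proof.
move=> hc; elim => [|n IH] hn K hK hadj.
- have /card_gt0P [x xK] : 0 < #|K| by exact: ltnW.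
  have [y yK yx] := two_elems hK xK.
  by have [i] := hadj y x yK xK yx.
- have hn' : n <= size Hs by exact: ltnW.
  have [KP | /subsetPn [w wK wP]] := boolP (K \subset \bigcup_(j < n) nth set0 Hs j).
  + have [i lt_in Ki] : exists2 i, i < n & K \subset nth set0 Hs i.
      apply: (IH hn' K hK) => x y xK yK xy.
      have [i lt_i /andP [xi yi]] := hadj x y xK yK xy.
      have [lt_in|ge_in] := ltnP i n; first by exists i => //; apply/andP.
      have ein : i = n by lia.
      subst i.
      have xP := subsetP KP x xK; have yP := subsetP KP y yK.
      case n0: (n == 0).
        by move/inBP: xP => [j]; rewrite (eqP n0).
      have /= [_ [j lt_jn sub]] := hc n (introT andP (conj (neq0_lt0n n0) hn)).
      exists j => //; apply/andP; split; apply: (subsetP sub); rewrite inE.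
        by rewrite xi xP.
      by rewrite yi yP.
    by exists i => //; exact: leqW.
  + exists n => //; apply/subsetP => u uK.
    have hw : forall z, z \in K -> z != w ->
        (w \in nth set0 Hs n) && (z \in nth set0 Hs n).
      move=> z zK zw.
      have wz : w != z by rewrite eq_sym.
      have [i lt_i /andP [wi zi]] := hadj w z wK zK wz.
      have [lt_in|ge_in] := ltnP i n.
        by case/negP: wP; apply/inBP; exists i.
      have -> : n = i by lia.
      by rewrite wi zi.
    case: (eqVneq u w) => [->|uw].
      have [y yK yw] := two_elems hK wK.
      by case/andP: (hw y yK yw).
    by case/andP: (hw u uK uw).
Qed.

Lemma closedT (V : finType) (r : nat) (e : rel V) (Hs : seq {set V}) :
  5 <= r ->
  (forall x y : V, e x y <-> (x != y /\ exists2 H, H \in Hs & (x \in H) && (y \in H))) ->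
  condT Hs ->
  forall (S : {set V}) x y, #|S| = r -> x \in S -> y \in S -> x != y ->
  (forall u v, u \in S -> v \in S -> u != v ->
       ~ ((u == x) && (v == y) || (u == y) && (v == x)) -> e u v) ->
  e x y.
Proof.
move=> hr he hc S x y hS xS yS xy hcl.
have adj : forall u v, e u v ->
    exists2 i, i < size Hs & (u \in nth set0 Hs i) && (v \in nth set0 Hs i).
  move=> u v /he [_ [H0 /(nthP set0) [i lt_i eqH] uv]].
  by exists i => //; rewrite eqH.
have clq : forall z, (z == x) || (z == y) ->
    exists2 i, i < size Hs & S :\ z \subset nth set0 Hs i.
  move=> z hz; have zS : z \in S by case/orP: hz => /eqP ->.
  apply: (cliqueB hc (leqnn _)).
    have := cardsD1 z S; rewrite zS hS add1n; lia.
  move=> u v; rewrite !inE => /andP [uz uS] /andP [vz vS] uv; apply: adj.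
  apply: hcl => //.
  case/orP: hz => /eqP zE; subst z.
    by rewrite (negbTE uz) (negbTE vz) andbF.
  by rewrite (negbTE uz) (negbTE vz) andbF.
have hx : (x == x) || (x == y) by rewrite eqxx.
have hy : (y == x) || (y == y) by rewrite eqxx orbT.
have [i ilt Si] := clq x hx.
have [j jlt Sj] := clq y hy.
case: (eqVneq i j) => [eij|nij].
- subst j; apply/he; split => //; exists (nth set0 Hs i); first exact: mem_nth.
  rewrite (subsetP Sj x) ?(subsetP Si y) // !inE ?xS ?yS ?andbT //.
  by rewrite eq_sym.
- exfalso.
  have hU := cardsUI (S :\ x) (S :\ y).
  have hUS : #|S :\ x :|: S :\ y| <= #|S|.
    by apply: subset_leq_card; rewrite subUset !subD1set.
  have c1 := cardsD1 x S; have c2 := cardsD1 y S.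
  rewrite xS add1n in c1; rewrite yS add1n in c2.
  have le2 : #|(S :\ x) :&: (S :\ y)| <= 2.
    apply: leq_trans (subset_leq_card (setISS Si Sj)) _.
    case: (ltngtP i j) => hij.
    + exact: interA.
    + by rewrite setIC; apply: interA.
    + by rewrite hij eqxx in nij.
  lia.
Qed.

Theorem lemma4p13 (V : finType) (r : nat) (e : rel V) :
  5 <= r -> is_Kr_tree r e ->
  forall x y : V, Kr_closure r e x y <-> e x y.
Proof.
move=> hr [Hs [_ _ _ he hc]] x y; split; last exact: Krc_base.
elim => {x y} [x y //|S x y hS xS yS xy _ IH].
apply: (closedT hr he hc hS xS yS xy) => u v uS vS uv hex.
exact: IH.
Qed.
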